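(* Let $M$ be a finitely generated $R$-module with $n={\rm rk}(M)$. Let $U$ be an additive subgroup of $M$ with $e(U)=e<\infty$ and $r_{M,U}=ne-{\rm rk}_e(U)>0$, let $b>0$ be an integer, and let $r'$ be a nonnegative integer with $r'<r_{M,U}\,b$. Then there exists a sequence $(U_m)$ of additive subgroups with $U\subset U_m\subset M$, $U_m\ne U$, $e(U_m)=eb$, $U_m\to U$ (in the space of subsets of $M$), and $r_{M,U_m}=r'$.
   Context: $R=\mathbb{F}_p[x,x^{-1}]$, $p$ prime. For an additive subgroup $U$ of an $R$-module, $e(U)$ is the minimal positive integer $e$ with $x^eU=U$, and $+\infty$ if none exists. The rank ${\rm rk}(M)$ of a finitely generated $R$-module is the maximal number of elements freely generating a free submodule ($0$ if none). If $x^mU=U$, ${\rm rk}_m(U)$ is the rank of $U$ regarded as an $R$-module via $x\ast u=x^mu$. For $U$ with $e=e(U)<\infty$, $r_{M,U}=\,{\rm rk}(M)\,e-{\rm rk}_e(U)$. Convergence of subsets $U_m\to U$ of $M$ means pointwise convergence of indicator functions. *)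

(* Defs.v *)
(* An R-module, R = F_p[x,x^-1], is encoded as an abelian
   group M with p*M = 0 together with the additive automorphism sigma = (x * _)
   and its inverse tau = (x^-1 * _). *)
From mathcomp Require Import all_boot all_order all_algebra.
Set Implicit Arguments. Unset Strict Implicit. Unset Printing Implicit Defensive.
Import GRing.Theory.
Local Open Scope ring_scope.

(* A Laurent polynomial over F_p represented as x^{-N} * q(x), a pair (N, q);
   it is zero iff q = 0. *)
Definition laurent (p : nat) := (nat * {poly 'F_p})%type.

Section Defs.
Variables (p : nat) (M : zmodType).

Definition lact (s t : M -> M) (c : laurent p) (v : M) : M :=
  iter c.1 t (\sum_(i < size c.2) (iter i s v) *+ nat_of_ord (c.2)`_i).

Definition lindep (s t : M -> M) (k : nat) (g : 'I_k -> M) : Prop :=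
  forall c : 'I_k -> laurent p,
    \sum_(i < k) lact s t (c i) (g i) = 0 -> forall i, (c i).2 = 0.

Definition has_rank (s t : M -> M) (S : M -> Prop) (r : nat) : Prop :=
  (exists g : 'I_r -> M, (forall i, S (g i)) /\ lindep s t g) /\
  (forall k (g : 'I_k -> M), (forall i, S (g i)) -> lindep s t g -> (k <= r)%N).

Definition fin_gen (s t : M -> M) : Prop :=
  exists k (g : 'I_k -> M), forall m : M,
    exists c : 'I_k -> laurent p, m = \sum_(i < k) lact s t (c i) (g i).

Definition add_subgroup (U : M -> Prop) : Prop :=
  U 0 /\ (forall a b, U a -> U b -> U (a + b)) /\ (forall a, U a -> U (- a)).

Definition img_eq (f : M -> M) (U : M -> Prop) : Prop :=
  (forall u, U u -> U (f u)) /\ (forall m, U m -> exists u, U u /\ f u = m).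

Definition is_e (s : M -> M) (U : M -> Prop) (e : nat) : Prop :=
  (0 < e)%N /\ img_eq (iter e s) U /\
  (forall e', (0 < e')%N -> (e' < e)%N -> ~ img_eq (iter e' s) U).

(* pointwise convergence of indicator functions *)
Definition set_cvg (Us : nat -> M -> Prop) (U : M -> Prop) : Prop :=
  forall v, exists N, forall m, (N <= m)%N -> (Us m v <-> U v).

End Defs.

(* Main.v *)
Require Import Defs.
From mathcomp Require Import all_boot all_order all_algebra.
From Stdlib Require Import Classical FunctionalExtensionality.
From mathcomp Require Import ring zify.
Set Implicit Arguments. Unset Strict Implicit. Unset Printing Implicit Defensive.
Import GRing.Theory.
Local Open Scope ring_scope.

Section Act.
Variables (p : nat) (hp : prime p) (M : zmodType).
Hypothesis hchar : forall m : M, m *+ p = 0.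
Local Notation P := {poly 'F_p}.

Definition addf (f : M -> M) := forall x y, f (x + y) = f x + f y.

Lemma addf0 f : addf f -> f 0 = 0.
Proof. by move=> h; apply: (@addrI _ (f 0)); rewrite -h !addr0. Qed.
Lemma addfN f : addf f -> forall x, f (- x) = - f x.
Proof. by move=> h x; apply: (@addrI _ (f x)); rewrite -h !subrr addf0. Qed.
Lemma addfB f : addf f -> forall x y, f (x - y) = f x - f y.
Proof. by move=> h x y; rewrite h addfN. Qed.
Lemma addfMn f : addf f -> forall x n, f (x *+ n) = f x *+ n.
Proof. by move=> h x; elim=> [|n IH]; rewrite ?mulr0n ?addf0 // !mulrS h IH. Qed.
Lemma addf_sum f : addf f -> forall (I : finType) (F : I -> M),
  f (\sum_i F i) = \sum_i f (F i).
Proof.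
move=> h I F; apply: (big_rec2 (fun x y => f y = x)); first exact: addf0.
by move=> i a b _ <-; rewrite h.
Qed.
Lemma addf_iter f : addf f -> forall n, addf (iter n f).
Proof. by move=> h; elim=> [|n IH] x y //=; rewrite IH h. Qed.
Lemma iter_comm (f g : M -> M) : (forall x, f (g x) = g (f x)) -> forall n x, iter n f (g x) = g (iter n f x).
Proof. by move=> h; elim=> [|n IH] x //=; rewrite IH h. Qed.
Lemma iter_cancel (f g : M -> M) : cancel f g -> forall n, cancel (iter n f) (iter n g).
Proof. by move=> h; elim=> [|n IH] x //; rewrite [iter n.+1 g _]iterSr /= h IH. Qed.
Lemma iter_mul (f : M -> M) a b x : iter (a * b) f x = iter b (iter a f) x.
Proof. by elim: b x => [|b IH] x; rewrite ?muln0 //= mulnS iterD IH. Qed.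

Definition sc (k : 'F_p) (v : M) : M := v *+ nat_of_ord k.

Lemma mulrn_modp (v : M) n : v *+ (n %% p)%N = v *+ n.
Proof. by rewrite {2}(divn_eq n p) mulrnDr mulnC mulrnA hchar mul0rn add0r. Qed.

Lemma valFpD (x y : 'F_p) : nat_of_ord (x + y)%R = (((x : nat) + y) %% p)%N.
Proof. exact: (congr1 (modn _) (Fp_cast hp)). Qed.
Lemma valFpM (x y : 'F_p) : nat_of_ord (x * y)%R = (((x : nat) * y) %% p)%N.
Proof. exact: (congr1 (modn _) (Fp_cast hp)). Qed.

Lemma scD k1 k2 v : sc (k1 + k2) v = sc k1 v + sc k2 v.
Proof.
by rewrite /sc -mulrnDr valFpD mulrn_modp.
Qed.
Lemma scM k1 k2 v : sc (k1 * k2) v = sc k1 (sc k2 v).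
Proof.
by rewrite /sc -mulrnA mulnC valFpM mulrn_modp.
Qed.
Lemma sc0 v : sc 0 v = 0. Proof. by rewrite /sc /= mulr0n. Qed.
Lemma sc1 v : sc 1 v = v. Proof. by rewrite /sc /= modn_small. Qed.
Lemma scvD k : addf (sc k). Proof. by move=> x y; rewrite /sc mulrnDl. Qed.


Lemma gauss (R : idomainType) l k (A : 'M[R]_(k, l)) :
  (l < k)%N -> exists w : 'rV[R]_k, w != 0 /\ w *m A = 0.
Proof.
elim: l k A => [|l IH] k A hlk.
  exists (const_mx 1); split; last by apply/matrixP => ? [].
  apply/eqP => /matrixP /(_ 0 (Ordinal hlk)); rewrite !mxE => /eqP.
  by rewrite oner_eq0.
case: (pickP (fun i => A i ord0 != 0)) => [i0 hi0 | h0].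
  move: A hlk i0 hi0; case: k => [|k'] A hlk i0 hi0; first by have := ltn_ord i0.
  set a := A i0 ord0 in hi0.
  pose B : 'M[R]_(k', l) := \matrix_(j, c)
     (a * A (lift i0 j) (lift ord0 c) - A (lift i0 j) ord0 * A i0 (lift ord0 c)).
  have [w' [nz' hw']] := IH k' B hlk.
  pose w : 'rV[R]_(k'.+1) := \row_i (if unlift i0 i is Some j then a * w' 0 j
       else - \sum_j w' 0 j * A (lift i0 j) ord0).
  exists w; split.
    move: nz'; apply: contra => /eqP w0; apply/eqP/matrixP => x j.
    rewrite (ord1 x) mxE; have := congr1 (fun N : 'M[R]_(1, k'.+1) => N 0 (lift i0 j)) w0.
    by rewrite !mxE liftK => /eqP; rewrite mulf_eq0 (negbTE hi0) => /eqP.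
  apply/matrixP => x c; rewrite !mxE (bigD1_ord i0) //= !mxE unlift_none.
  under eq_bigr => j _ do rewrite !mxE liftK.
  rewrite mulNr mulr_suml -sumrN -big_split /=.
  case: (unliftP ord0 c) => [c'|] ->.
    have := congr1 (fun N : 'M[R]_(1, l) => N 0 c') hw'; rewrite !mxE => hB; rewrite -[RHS]hB.
    by apply: eq_bigr => j _; rewrite mxE; ring.
  by apply: big1 => j _; rewrite /a; ring.
pose A' : 'M[R]_(k, l) := \matrix_(i, c) A i (lift ord0 c).
have [w [nz hw]] := IH k A' (ltnW hlk).
exists w; split => //; apply/matrixP => x c; rewrite (ord1 x) !mxE.
case: (unliftP ord0 c) => [c'|] ->.
  have := congr1 (fun N : 'M[R]_(1, l) => N 0 c') hw; rewrite !mxE => hB; rewrite -[RHS]hB.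
  by apply: eq_bigr => i _; rewrite mxE.
apply: big1 => i _; have := h0 i; rewrite /= => /negbFE /eqP ->.
by rewrite mulr0.
Qed.

Section A.
Variable a : M -> M.
Hypothesis ha : addf a.

Definition pact (c : P) (v : M) : M := \sum_(i < size c) sc c`_i (iter i a v).

Lemma pactE n (c : P) (v : M) : (size c <= n)%N -> pact c v = \sum_(i < n) sc c`_i (iter i a v).
Proof.
move=> h; rewrite /pact (big_ord_widen n (fun i => sc c`_i (iter i a v)) h).
rewrite big_mkcond; apply: eq_bigr => i _; case: ifP => // hi.
by rewrite nth_default ?sc0 // leqNgt hi.
Qed.

Lemma pact0 v : pact 0 v = 0.
Proof. by rewrite /pact size_poly0 big_ord0. Qed.

Lemma pactD (c1 c2 : P) v : pact (c1 + c2) v = pact c1 v + pact c2 v.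
Proof.
rewrite !(pactE (n := maxn (size c1) (size c2))) ?leq_maxl ?leq_maxr ?size_polyD //.
by rewrite -big_split; apply: eq_bigr => i _; rewrite coefD scD.
Qed.

Lemma pactC k v : pact k%:P v = sc k v.
Proof. by rewrite (pactE (n := 1)) ?size_polyC_leq1 // big_ord1 coefC. Qed.

Lemma pact_addv (c : P) : addf (pact c).
Proof.
move=> x y; rewrite /pact -big_split; apply: eq_bigr => i _.
by rewrite (addf_iter ha) scvD.
Qed.

Lemma sc_comm f k v : addf f -> f (sc k v) = sc k (f v).
Proof. by move=> hf; rewrite /sc addfMn. Qed.

Lemma pact_comm f (c : P) v : addf f -> (forall x, f (a x) = a (f x)) ->
  f (pact c v) = pact c (f v).
Proof.
move=> hf hc; rewrite /pact (addf_sum hf); apply: eq_bigr => i _.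
by rewrite sc_comm // (iter_comm (f := a) (g := f)).
Qed.

Lemma pactMX (c : P) v : pact (c * 'X) v = a (pact c v).
Proof.
rewrite (pactE (n := (size c).+1)); last first.
  by apply: leq_trans (size_polyMleq _ _) _; rewrite size_polyX addn2.
rewrite big_ord_recl coefMX eqxx sc0 add0r /pact (addf_sum ha).
by apply: eq_bigr => i _; rewrite coefMX /= sc_comm.
Qed.

Lemma pactZ k (c : P) v : pact (k%:P * c) v = sc k (pact c v).
Proof.
rewrite mul_polyC (pactE (n := size c)) ?size_scale_leq // /pact.
rewrite (addf_sum (scvD k)); apply: eq_bigr => i _; by rewrite coefZ scM.
Qed.

Lemma pactM (c1 c2 : P) v : pact (c1 * c2) v = pact c1 (pact c2 v).
Proof.
elim/poly_ind: c1 => [|q k IH]; first by rewrite mul0r !pact0.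
rewrite mulrDl mulrAC pactD pactMX IH pactZ pactD pactMX pactC //.
Qed.

Lemma pact1 v : pact 1 v = v.
Proof. by rewrite -polyC1 pactC sc1. Qed.

Lemma pactX n v : pact ('X^n) v = iter n a v.
Proof.
elim: n v => [|n IH] v; first by rewrite expr0 pact1.
by rewrite exprSr pactMX IH.
Qed.

Lemma pactN (c : P) v : pact (- c) v = - pact c v.
Proof. by apply: (@addrI _ (pact c v)); rewrite -pactD !subrr pact0. Qed.
Lemma pactB (c1 c2 : P) v : pact (c1 - c2) v = pact c1 v - pact c2 v.
Proof. by rewrite pactD pactN. Qed.
Lemma pact_sum (I : finType) (c : I -> P) v : pact (\sum_i c i) v = \sum_i pact (c i) v.
Proof.
apply: (big_rec2 (fun x y => pact y v = x)); first exact: pact0.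
by move=> i x y _ <-; rewrite pactD.
Qed.
Lemma pactv0 (c : P) : pact c 0 = 0. Proof. exact: addf0 (pact_addv c). Qed.
Lemma pactvN (c : P) v : pact c (- v) = - pact c v. Proof. exact: (addfN (pact_addv c) v). Qed.
Lemma pactv_sum (c : P) (I : finType) (F : I -> M) : pact c (\sum_i F i) = \sum_i pact c (F i).
Proof. exact: (addf_sum (pact_addv c)). Qed.
Lemma pact_iter (c : P) n v : iter n a (pact c v) = pact (c * 'X^n) v.
Proof. by rewrite mulrC pactM pactX. Qed.

Definition inspan (I : finType) (h : I -> M) x :=
  exists c : I -> P, x = \sum_i pact (c i) (h i).
Definition ind (I : finType) (g : I -> M) :=
  forall c : I -> P, \sum_i pact (c i) (g i) = 0 -> forall i, c i = 0.


Definition sumfam (I J : finType) (g : I -> M) (h : J -> M) : I + J -> M :=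
  fun s => match s with inl i => g i | inr j => h j end.

Lemma ind_reindex (I J : finType) (g : I -> M) (f : J -> I) (g' : J -> M) :
  bijective f -> (forall j, g' j = g (f j)) -> ind g -> ind g'.
Proof.
case=> fi fK fiK hg' hi c hc j.
have := hi (fun i => c (fi i)) _ (f j); rewrite fK; apply.
rewrite (reindex f) /=; last by exists fi => x _; [exact: fK | exact: fiK].
by rewrite -[RHS]hc; apply: eq_bigr => j' _; rewrite fK hg'.
Qed.

Lemma inspan_reindex (I J : finType) (g : I -> M) (f : J -> I) (g' : J -> M) x :
  bijective f -> (forall j, g' j = g (f j)) -> inspan g x -> inspan g' x.
Proof.
case=> fi fK fiK hg' [c ->]; exists (fun j => c (f j)).
rewrite (reindex f) /=; last by exists fi => y _; [exact: fK | exact: fiK].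
by apply: eq_bigr => j _; rewrite hg'.
Qed.

Lemma notind_of_span l k (h : 'I_l -> M) (g : 'I_k -> M) : (l < k)%N ->
  (forall j, exists D : P, D != 0 /\ inspan h (pact D (g j))) -> ~ ind g.
Proof.
move=> hlk hs.
have [D hD] := fin_all_exists hs.
have : forall j, exists c : 'I_l -> P, pact (D j) (g j) = \sum_i pact (c i) (h i).
  by move=> j; have [_ [c hc]] := hD j; exists c.
move/fin_all_exists => [C hC].
pose A := \matrix_(j, i) C j i.
have [w [nz hw]] := gauss A hlk.
move=> hind.
have h0 := hind (fun j => w 0 j * D j).
suff hz : forall j, w 0 j = 0.
  by move/eqP: nz; apply; apply/matrixP => x j; rewrite (ord1 x) mxE hz.
have hsum : \sum_j pact (w 0 j * D j) (g j) = 0.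
  transitivity (\sum_j \sum_i pact (w 0 j * C j i) (h i)).
    apply: eq_bigr => j _; rewrite pactM hC pactv_sum.
    by apply: eq_bigr => i _; rewrite pactM.
  rewrite exchange_big /=; apply: big1 => i _.
  rewrite -pact_sum; have := congr1 (fun N : 'M[P]_(1, l) => N 0 i) hw.
  rewrite !mxE => hA.
  have -> : \sum_j w 0 j * C j i = 0.
    by rewrite -[RHS]hA; apply: eq_bigr => j _; rewrite mxE.
  exact: pact0.
move=> j; have := h0 hsum j; move/eqP; rewrite mulf_eq0 => /orP [/eqP //|].
by have [/negP] := hD j.
Qed.

Lemma ext_mult (I : finType) (h : I -> M) x : ind h ->
  ~ ind (sumfam h (fun _ : 'I_1 => x)) ->
  exists D, D != 0 /\ inspan h (pact D x).
Proof.
move=> hi hn; apply: NNPP => hno; apply: hn => c hc.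
rewrite big_sumType /= big_ord1 in hc.
case: (eqVneq (c (inr ord0)) 0) => h0.
  rewrite h0 pact0 addr0 in hc.
  by case=> [i|j]; [exact: (hi _ hc) | rewrite (ord1 j)].
exfalso; apply: hno; exists (c (inr ord0)); split => //.
exists (fun i => - c (inl i)).
move/eqP: hc; rewrite addrC addr_eq0 => /eqP ->; rewrite -sumrN.
by apply: eq_bigr => i _; rewrite pactN.
Qed.

Lemma upper (I J : finType) (h : I -> M) (g : J -> M) : ind g ->
  (forall j, exists D, D != 0 /\ inspan h (pact D (g j))) -> (#|J| <= #|I|)%N.
Proof.
move=> hg hs; rewrite leqNgt; apply/negP => hlt.
apply: (@notind_of_span _ _ (h \o enum_val) (g \o enum_val) hlt).
  move=> j; have [D [hD hsp]] := hs (enum_val j); exists D; split=> //.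
  apply: inspan_reindex hsp => //.
  by exists enum_rank; [exact: enum_valK | exact: enum_rankK].
apply: ind_reindex hg => //.
by exists enum_rank; [exact: enum_valK | exact: enum_rankK].
Qed.

Lemma greedy (I L : finType) (B : I -> M) (H : L -> M) : ind B -> ind H ->
  (#|I| < #|L|)%N -> exists w, ind (sumfam B (fun _ : 'I_1 => w)).
Proof.
move=> hB hH hlt; apply: NNPP => hno.
have : (#|L| <= #|I|)%N.
  apply: (@upper _ _ B _ hH) => j; apply: ext_mult => // hi. apply: hno.
  by exists (H j).
by rewrite leqNgt hlt.
Qed.

Lemma inspan0 (I : finType) (h : I -> M) : inspan h 0.
Proof. by exists (fun _ => 0); rewrite big1 // => i _; rewrite pact0. Qed.

Lemma inspanD (I : finType) (h : I -> M) x y : inspan h x -> inspan h y -> inspan h (x + y).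
Proof.
move=> [c1 ->] [c2 ->]; exists (fun i => c1 i + c2 i).
by rewrite -big_split; apply: eq_bigr => i _; rewrite pactD.
Qed.

Lemma inspan_pact (I : finType) (h : I -> M) c x : inspan h x -> inspan h (pact c x).
Proof.
move=> [d ->]; exists (fun i => c * d i).
by rewrite pactv_sum; apply: eq_bigr => i _; rewrite pactM.
Qed.

Lemma inspan_sum (I J : finType) (h : I -> M) (F : J -> M) :
  (forall j, inspan h (F j)) -> inspan h (\sum_j F j).
Proof.
move=> hF; apply: (big_rec (inspan h)); first exact: inspan0.
by move=> j x _ hx; apply: inspanD.
Qed.

Lemma inspan_mono (I J : finType) (h : I -> M) (h' : J -> M) x :
  (forall i, inspan h' (h i)) -> inspan h x -> inspan h' x.
Proof.
move=> hh [c ->]; apply: inspan_sum => i; exact: inspan_pact.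
Qed.

Lemma inspan_gen (I : finType) (h : I -> M) i : inspan h (h i).
Proof.
exists (fun j => if j == i then 1 else 0).
rewrite (bigD1 i) //= eqxx pact1 big1 ?addr0 // => j /negbTE ->.
by rewrite pact0.
Qed.

End A.
Lemma modb_eq b n (j0 j : nat) : (j0 < b)%N -> (j < b)%N -> (j <= n * b + j0)%N ->
  (b %| n * b + j0 - j)%N -> j = j0.
Proof.
move=> h0 h1 hle /dvdnP [m hm].
have : (n * b + j0 = m * b + j)%N by rewrite -hm subnK.
move/(congr1 (modn^~ b)); rewrite !modnMDl !modn_small //.
Qed.

Lemma coef_decomp b (hb : (0 < b)%N) (F : 'I_b -> P) n (j0 : 'I_b) :
  (\sum_j (F j \Po 'X^b) * 'X^j)`_(n * b + j0) = (F j0)`_n.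
Proof.
rewrite coef_sum (bigD1 j0) //= big1 ?addr0.
  by rewrite coefMXn ltnNge leq_addl /= addnK coef_comp_poly_Xn // dvdn_mull // mulnK.
move=> j hj; rewrite coefMXn; case: ifP => // hlt.
rewrite coef_comp_poly_Xn //; case: ifP => // hd.
move: hlt => /negbT; rewrite -leqNgt => hle.
by have := modb_eq (ltn_ord j0) (ltn_ord j) hle hd => /val_inj h; rewrite h eqxx in hj.
Qed.

Lemma decomp_uniq b (hb : (0 < b)%N) (F : 'I_b -> P) :
  \sum_j (F j \Po 'X^b) * 'X^j = 0 -> forall j, F j = 0.
Proof.
move=> h j0; apply/polyP => n; rewrite coef0 -(coef_decomp hb F n j0) h coef0 //.
Qed.

Lemma decomp_ex b (hb : (0 < b)%N) (f : P) :
  exists F : 'I_b -> P, f = \sum_j (F j \Po 'X^b) * 'X^j.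
Proof.
exists (fun j : 'I_b => \poly_(n < size f) f`_(n * b + j)).
apply/polyP => i; pose j0 := Ordinal (ltn_pmod i hb).
have hi : i = (i %/ b * b + j0)%N by rewrite /= -divn_eq.
rewrite [in RHS]hi coef_decomp // coef_poly -hi; case: ifP => // /negbT.
rewrite -leqNgt => hs; rewrite nth_default //; apply: (leq_trans hs).
by rewrite {2}hi; apply: leq_trans (leq_addr _ _); rewrite leq_pmulr.
Qed.

Lemma pact_comp a (ha : addf a) b (c : P) v :
  pact a (c \Po 'X^b) v = pact (iter b a) c v.
Proof.
elim/poly_ind: c v => [|q k IH] v; first by rewrite comp_poly0 !pact0.
rewrite comp_polyD comp_polyM comp_polyX comp_polyC.
rewrite pactD pactM // pactX // IH pactC pactD pactMX ?pactC //; last exact: addf_iter.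
congr (_ + _); rewrite (pact_comm (a := iter b a)) //; exact: addf_iter.
Qed.

Lemma ind_lift a (ha : addf a) b (hb : (0 < b)%N) (I : finType) (g : I -> M) :
  ind a g -> ind (iter b a) (fun ij : I * 'I_b => iter ij.2 a (g ij.1)).
Proof.
move=> hg c hc [i j].
have hC := hg (fun i => \sum_j (c (i, j) \Po 'X^b) * 'X^j).
apply: (decomp_uniq hb (F := fun j => c (i, j))); apply: hC.
rewrite -[RHS]hc.
transitivity (\sum_i' \sum_j' pact (iter b a) (c (i', j')) (iter j' a (g i'))).
  apply: eq_bigr => i' _; rewrite pact_sum; apply: eq_bigr => j' _.
  by rewrite pactM // pactX // pact_comp.
by rewrite pair_bigA; apply: eq_bigr => -[i' j'] _.
Qed.

Lemma inspan_lift a (ha : addf a) b (hb : (0 < b)%N) (I : finType) (h : I -> M) x :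
  inspan a h x -> inspan (iter b a) (fun ij : I * 'I_b => iter ij.2 a (h ij.1)) x.
Proof.
have hab := addf_iter ha b.
move=> [c ->]; apply: inspan_sum => // i.
have [F ->] := decomp_ex hb (c i); rewrite pact_sum //; apply: inspan_sum => // j.
rewrite pactM // pactX // pact_comp //; apply: inspan_pact => //.
exact: (inspan_gen (iter b a) (fun ij : I * 'I_b => iter ij.2 a (h ij.1)) (i, j)).
Qed.

Lemma mult_comp (D : P) b : D != 0 ->
  exists Q P', P' != 0 /\ Q * D = P' \Po 'X^b.
Proof.
move=> hD; pose d := size D.
pose phi (i : 'I_(#|{: 'rV['F_p]_d}|).+1) : 'rV['F_p]_d :=
  \row_(k < d) (('X^b ^+ i) %% D)`_k.
have : ~~ injectiveb phi.
  apply/negP => /injectiveP hinj; have := leq_card phi hinj.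
  by rewrite card_ord ltnn.
case/injectivePn => i [j hij heq].
have hmod : ('X^b ^+ i) %% D = ('X^b ^+ j) %% D.
  apply/polyP => k; case: (ltnP k d) => hk.
    by have := congr1 (fun r : 'rV['F_p]_d => r 0 (Ordinal hk)) heq; rewrite !mxE.
  rewrite !nth_default //; apply: leq_trans hk; apply: ltnW; by rewrite ltn_modp.
have hdv : D %| ('X^b ^+ i - 'X^b ^+ j).
  by rewrite /dvdp modpD modpN hmod subrr.
exists (('X^b ^+ i - 'X^b ^+ j) %/ D), ('X^i - 'X^j); split.
  apply/eqP => h; have := congr1 (fun q : P => q`_i) h.
  rewrite coefB !coefXn eqxx coef0.
  have -> : (nat_of_ord i == nat_of_ord j) = false by apply/negbTE.
  by rewrite subr0 => /eqP; rewrite oner_eq0.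
by rewrite divpK // comp_polyB !comp_Xn_poly.
Qed.

Lemma mult_lift a (ha : addf a) b (hb : (0 < b)%N) (I : finType) (h : I -> M) x :
  (exists D, D != 0 /\ inspan a h (pact a D x)) ->
  exists D, D != 0 /\ inspan (iter b a) (fun ij : I * 'I_b => iter ij.2 a (h ij.1)) (pact (iter b a) D x).
Proof.
move=> [D [hD hs]]; have [Q [P' [hP' hQ]]] := mult_comp b hD.
exists P'; split => //; apply: inspan_lift => //.
by rewrite -pact_comp // -hQ pactM //; apply: inspan_pact.
Qed.

Lemma ind_lindep a ai (ha : addf a) (hK' : cancel ai a) k (g : 'I_k -> M) :
  ind a g -> lindep p a ai g.
Proof.
move=> hg c hc i.
pose K := \max_(j < k) (c j).1.
have hK j : ((c j).1 <= K)%N by apply: (leq_bigmax j).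
have hKa := addf_iter ha K.
have hs : \sum_j pact a ((c j).2 * 'X^(K - (c j).1)) (g j) = 0.
  transitivity (iter K a (\sum_j lact a ai (c j) (g j))); last by rewrite hc (addf0 hKa).
  rewrite (addf_sum hKa); apply: eq_bigr => j _.
  have e1 : forall w, iter K a (iter (c j).1 ai w) = iter (K - (c j).1) a w.
    move=> w; rewrite -{1}(subnK (hK j)) iterD; congr (iter _ a _).
    exact: (iter_cancel hK').
  by rewrite /lact e1 pact_iter.
have := hg _ hs i.
by move/eqP; rewrite mulf_eq0 expf_eq0 polyX_eq0 andbF orbF => /eqP.
Qed.

Lemma lindep_ind a ai k (g : 'I_k -> M) : lindep p a ai g -> ind a g.
Proof. by move=> h c hc i; exact: (h (fun j => (0%N, c j)) hc i). Qed.

Lemma mk_rank a ai (ha : addf a) (hK' : cancel ai a) (S : M -> Prop) (I : finType)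
  (F H : I -> M) : (forall i, S (F i)) -> ind a F ->
  (forall x, S x -> exists D, D != 0 /\ inspan a H (pact a D x)) ->
  has_rank p a ai S #|I|.
Proof.
move=> hS hF hsp; split.
  exists (F \o enum_val); split => [i|]; first exact: hS.
  apply: ind_lindep => //; apply: ind_reindex hF => //.
  by exists enum_rank; [exact: enum_valK | exact: enum_rankK].
move=> k g hgS hl; have hi := lindep_ind hl.
by have := upper ha hi (fun j => hsp _ (hgS j)); rewrite card_ord.
Qed.

Lemma rank_ind a ai S r : has_rank p a ai S r ->
  exists g : 'I_r -> M, (forall i, S (g i)) /\ ind a g.
Proof. move=> [[g [hS hl]] _]; exists g; split => //. exact: (lindep_ind hl). Qed.

Lemma rank_max a ai (ha : addf a) (hK' : cancel ai a) S r : has_rank p a ai S r ->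
  forall (I : finType) (g : I -> M), (forall i, S (g i)) -> ind a g -> (#|I| <= r)%N.
Proof.
move=> [_ hm] I g hS hg; apply: (hm _ (g \o enum_val)) => [i|]; first exact: hS.
apply: ind_lindep => //; apply: ind_reindex hg => //.
by exists enum_rank; [exact: enum_valK | exact: enum_rankK].
Qed.

Lemma rank_mult a ai (ha : addf a) (hK' : cancel ai a) S r (G : 'I_r -> M) :
  has_rank p a ai S r -> (forall i, S (G i)) -> ind a G ->
  forall x, S x -> exists D, D != 0 /\ inspan a G (pact a D x).
Proof.
move=> hr hS hG x hx; apply: ext_mult => // hi.
have h1 : forall i, S (sumfam G (fun _ : 'I_1 => x) i) by case=> [i|j] /=.
have := rank_max ha hK' hr h1 hi.
by rewrite card_sum !card_ord addn1 ltnn.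
Qed.

Lemma ext_n a (ha : addf a) (L : finType) (H : L -> M) : ind a H ->
  forall q (I : finType) (B : I -> M), ind a B -> (#|I| + q <= #|L|)%N ->
  exists E : 'I_q -> M, ind a (sumfam B E).
Proof.
move=> hH; elim=> [|q IH] I B hB hle.
  exists (fun _ : 'I_0 => (0 : M)); move=> c hc; rewrite big_sumType /= big_ord0 addr0 in hc.
  by case=> [i|[]] //; exact: (hB _ hc).
have hlt : (#|I| < #|L|)%N by apply: leq_trans hle; rewrite addnS ltnS leq_addr.
have [w hw] := greedy ha hB hH hlt.
have hle' : (#|{: I + 'I_1}| + q <= #|L|)%N by rewrite card_sum card_ord -addnA add1n.
have [E hE] := IH _ _ hw hle'.
exists (fun j : 'I_q.+1 => if unlift ord0 j is Some j' then E j' else w).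
pose f (s : I + 'I_q.+1) : (I + 'I_1) + 'I_q := match s with
  | inl i => inl (inl i)
  | inr j => if unlift ord0 j is Some j' then inr j' else inl (inr ord0) end.
pose fi (s : (I + 'I_1) + 'I_q) : I + 'I_q.+1 := match s with
  | inl (inl i) => inl i | inl (inr _) => inr ord0 | inr j' => inr (lift ord0 j') end.
apply: (ind_reindex (f := f)) hE.
  exists fi.
    by case=> [i|j] //=; case: (unliftP ord0 j) => [j'|] -> //.
  by case=> [[i|x]|j'] //=; [rewrite (ord1 x) unlift_none | rewrite liftK].
by case=> [i|j] //=; case: (unliftP ord0 j) => [j'|] _ //.
Qed.

Lemma extract a (IG IO : finType) (G : IG -> M) (O : IO -> M) :
  ind a (sumfam G O) -> forall cG cO cO',
  \sum_i pact a (cG i) (G i) + \sum_o pact a (cO o) (O o) = \sum_o pact a (cO' o) (O o) ->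
  (forall i, cG i = 0) /\ (forall o, cO o = cO' o).
Proof.
move=> hi cG cO cO' h.
have := hi (fun s => match s with inl i => cG i | inr o => cO o - cO' o end).
rewrite big_sumType /=.
have -> : \sum_o pact a (cO o - cO' o) (O o) = \sum_o pact a (cO o) (O o) - \sum_o pact a (cO' o) (O o).
  by rewrite -sumrB; apply: eq_bigr => o _; rewrite pactB.
rewrite addrA h subrr => /(_ erefl) hz; split => [i|o]; first exact: (hz (inl i)).
by apply/eqP; rewrite -subr_eq0; apply/eqP; exact: (hz (inr o)).
Qed.

Lemma img_comp (f g : M -> M) (U : M -> Prop) : img_eq f U -> img_eq g U -> img_eq (fun x => f (g x)) U.
Proof.
move=> [hf1 hf2] [hg1 hg2]; split => [u hu|m hm]; first by apply: hf1; apply: hg1.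
have [u1 [hu1 <-]] := hf2 m hm; have [u2 [hu2 <-]] := hg2 u1 hu1.
by exists u2.
Qed.

Lemma img_iter_mul (f : M -> M) (U : M -> Prop) e : img_eq (iter e f) U ->
  forall j, img_eq (iter (j * e) f) U.
Proof.
move=> he; elim=> [|j IH]; first by split => [u hu|m hm] //; exists m.
have := img_comp he IH; case=> h1 h2; split => [u hu|m hm].
  by rewrite mulSn iterD; apply: h1.
by have [u [hu hfu]] := h2 m hm; exists u; rewrite mulSn iterD.
Qed.

Lemma img_sub (f : M -> M) (U : M -> Prop) a c :
  img_eq (iter (a + c) f) U -> img_eq (iter c f) U -> img_eq (iter a f) U.
Proof.
move=> [h1 h2] [g1 g2]; split => [u hu|m hm].
  have [u' [hu' <-]] := g2 u hu; rewrite -iterD; exact: h1.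
have [u'' [hu'' <-]] := h2 m hm; exists (iter c f u''); split; first exact: g1.
by rewrite -iterD.
Qed.

Lemma bad_witness (f g : M -> M) (U : M -> Prop) : cancel f g -> cancel g f ->
  ~ img_eq f U -> exists w0, ~ U w0 /\
  forall W : M -> Prop, (forall u, U u -> W u) -> img_eq f W -> W w0.
Proof.
move=> hfg hgf hn.
case: (classic (forall u, U u -> U (f u))) => h1.
  case: (classic (forall m, U m -> U (g m))) => h2.
    exfalso; apply: hn; split => // m hm; exists (g m); split; [exact: h2 | exact: hgf].
  have [m hm] := not_all_ex_not _ _ h2.
  have [hUm hgm] := imply_to_and _ _ hm.
  exists (g m); split => // W hW [_ hb].
  have [u' [hu' hfu']] := hb m (hW _ hUm).
  by rewrite -hfu' hfg.
have [u hu] := not_all_ex_not _ _ h1.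
have [hUu hfu] := imply_to_and _ _ hu.
exists (f u); split => // W hW [hf _]; exact: hf _ (hW _ hUu).
Qed.

Lemma finite_bound (Q : nat -> nat -> Prop) :
  (forall i m m', (m <= m')%N -> Q i m -> Q i m') ->
  (forall i, exists N, Q i N) -> forall n, exists N, forall i, (i < n)%N -> Q i N.
Proof.
move=> hmono hQ; elim=> [|n [N IH]]; first by exists 0%N.
have [N' hN'] := hQ n; exists (maxn N N') => i; rewrite ltnS leq_eqVlt.
case/orP => [/eqP -> | hi]; first exact: hmono (leq_maxr _ _) hN'.
exact: hmono (leq_maxl _ _) (IH i hi).
Qed.

Lemma main (sigma tau : M -> M) (hadd : addf sigma) (hst : cancel sigma tau)
  (hts : cancel tau sigma)
  (n : nat) (hn : has_rank p sigma tau (fun _ => True) n)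
  (U : M -> Prop) (hU : add_subgroup U)
  (e : nat) (he : is_e sigma U e)
  (rU : nat) (hrU : has_rank p (iter e sigma) (iter e tau) U rU)
  (hpos : (rU < n * e)%N)
  (b : nat) (hb : (0 < b)%N)
  (r' : nat) (hr' : (r' < (n * e - rU) * b)%N) :
  exists Us : nat -> M -> Prop,
    (forall m, add_subgroup (Us m) /\ (forall u, U u -> Us m u) /\ Us m <> U /\
       is_e sigma (Us m) (e * b) /\
       exists rk, has_rank p (iter (e * b) sigma) (iter (e * b) tau) (Us m) rk /\
                  (rk + r' = n * (e * b))%N) /\
    set_cvg Us U.
Proof.
case: he => he0 [heimg hemin].
case: hU => hU0 [hUD hUN].
set y := iter e sigma; set ty := iter e tau.
have hay : addf y := addf_iter hadd e.
have cy : cancel y ty := iter_cancel hst e.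
have cy' : cancel ty y := iter_cancel hts e.
set z := iter b y; set tz := iter b ty.
have haz : addf z := addf_iter hay b.
have cz : cancel z tz := iter_cancel cy b.
have cz' : cancel tz z := iter_cancel cy' b.
have hzE : iter (e * b) sigma = z.
  by apply: functional_extensionality => x; rewrite iter_mul.
have htzE : iter (e * b) tau = tz.
  by apply: functional_extensionality => x; rewrite iter_mul.
have yU : forall u, U u -> U (y u) := heimg.1.
have yUinv : forall u, U u -> U (ty u).
  by move=> u hu; have [u' [hu' <-]] := heimg.2 u hu; rewrite cy.
have iyU : forall j u, U u -> U (iter j y u).
  by elim=> [|j IH] u hu //=; apply: yU; apply: IH.
have ityU : forall j u, U u -> U (iter j ty u).
  by elim=> [|j IH] u hu //=; apply: yUinv; apply: IH.
have izU : forall K u, U u -> U (iter K z u).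
  by move=> K u hu; rewrite -iter_mul; apply: iyU.
have itzU : forall K u, U u -> U (iter K tz u).
  by move=> K u hu; rewrite -iter_mul; apply: ityU.
have hyz : forall j x, iter j y (z x) = z (iter j y x).
  by move=> j x; rewrite /z -!iterD addnC.
have [h [_ hh]] := rank_ind hn.
have [g [hgU hg]] := rank_ind hrU.
have hy := ind_lift hadd he0 hh.
have [v hv] : exists v, ind y (sumfam g (fun _ : 'I_1 => v)).
  by apply: (greedy hay hg hy); rewrite card_prod !card_ord.
have hB0 := ind_lift hay hb hv.
have heb : (0 < e * b)%N by rewrite muln_gt0 he0 hb.
have hzfull : ind z (fun ij : 'I_n * 'I_(e * b) => iter ij.2 sigma (h ij.1)).
  by have := ind_lift hadd heb hh; rewrite hzE.
set N := (n * (e * b))%N.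
set t := (N - r')%N.
set k := (t - rU * b)%N.
set q := (k - b)%N.
set mb := minn k b.
have e1 : ((n * e - rU) * b = N - rU * b)%N by rewrite mulnBl -mulnA.
have e2 : (b <= N - rU * b)%N.
  by rewrite -e1 leq_pmull // subn_gt0.
have hk : (0 < k)%N by rewrite /k /t; move: hr'; rewrite e1; lia.
have hmb : (0 < mb)%N by rewrite /mb leq_min hk hb.
have hmbb : (mb <= b)%N by rewrite /mb geq_minr.
have hcard0 : (#|{: ('I_rU + 'I_1) * 'I_b}| + q <= #|{: 'I_n * 'I_(e * b)}|)%N.
  rewrite !card_prod card_sum !card_ord -/N mulnDl mul1n /q /k /t.
  move: hr' e2; rewrite e1; lia.
have hcardt : (rU * b + (mb + q) = t)%N.
  rewrite /mb /q /k /t; move: hr'; rewrite e1; lia.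
have ht : (t + r' = N)%N by rewrite /t; move: hr'; rewrite e1; lia.
have [E hE] := ext_n haz hzfull hB0 hcard0.
pose G := fun ij : 'I_rU * 'I_b => iter ij.2 y (g ij.1).
pose O := sumfam (fun j : 'I_b => iter j y v) E.
have hBO : ind z (sumfam G O).
  pose f (s : ('I_rU * 'I_b) + ('I_b + 'I_q)) : (('I_rU + 'I_1) * 'I_b) + 'I_q :=
    match s with inl ij => inl (inl ij.1, ij.2) | inr (inl j) => inl (inr ord0, j)
    | inr (inr l) => inr l end.
  pose fi (s : (('I_rU + 'I_1) * 'I_b) + 'I_q) : ('I_rU * 'I_b) + ('I_b + 'I_q) :=
    match s with inl (inl i, j) => inl (i, j) | inl (inr _, j) => inr (inl j)
    | inr l => inr (inr l) end.
  apply: (ind_reindex (f := f)) hE.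
    exists fi; first by case=> [[i j]|[j|l]].
    by case=> [[[i|x] j]|l] //=; rewrite (ord1 x).
  by case=> [[i j]|[j|l]].
have hGU : forall i, U (G i) by move=> [i j]; apply: iyU; apply: hgU.
have UM : forall u, U u -> exists D, D != 0 /\ inspan z G (pact z D u).
  move=> u hu; apply: mult_lift => //.
  exact: (rank_mult hay cy' hrU hgU hg hu).
pose incl (o : 'I_b + 'I_q) : bool := if o is inl j then (j < mb)%N else true.
pose ex (o : 'I_b + 'I_q) : nat :=
  if o is inl j then (if (j : nat) == 0%N then 0%N else 1%N) else 1%N.
pose lin : P := 'X - 1%:P.
pose rho m o : P := if incl o then lin ^+ (m + ex o) else 0.
pose Um m x := exists K u (c : 'I_b + 'I_q -> P), U u /\
  iter K z x = u + \sum_o pact z (c o * rho m o) (O o).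
have hlin : forall m, lin ^+ m != 0.
  by move=> m; rewrite expf_neq0 // -size_poly_eq0 size_XsubC.
have hrho_nz : forall m o, incl o -> rho m o != 0 by move=> m o ho; rewrite /rho ho.
have hrho_dvd : forall m o, exists r, rho m o = r * lin ^+ m.
  move=> m o; rewrite /rho; case: (incl o).
    by exists (lin ^+ ex o); rewrite addnC exprD.
  by exists 0; rewrite mul0r.
have sum_delta : forall (c : P) (o0 : 'I_b + 'I_q),
    \sum_o pact z (if o == o0 then c else 0) (O o) = pact z c (O o0).
  move=> c o0; rewrite (bigD1 o0) //= eqxx big1 ?addr0 // => o /negbTE ->.
  exact: pact0.
have relx : forall m x K u (c : 'I_b + 'I_q -> P) D (al : 'I_rU * 'I_b -> P),
    iter K z x = u + \sum_o pact z (c o * rho m o) (O o) ->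
    pact z D u = \sum_i pact z (al i) (G i) ->
    pact z (D * 'X^K) x = \sum_i pact z (al i) (G i) +
                           \sum_o pact z (D * (c o * rho m o)) (O o).
  move=> m x K u c D al hx hu.
  rewrite pactM // pactX // hx (pact_addv haz) hu pactv_sum //; congr (_ + _).
  by apply: eq_bigr => o _; rewrite (pactM haz D).
have hext := extract hBO.
have UmU : forall m u, U u -> Um m u.
  move=> m u hu; exists 0%N, u, (fun _ => 0); split => //=.
  by rewrite big1 ?addr0 // => o _; rewrite mul0r pact0.
have Umind : forall m o, Um m (pact z (rho m o) (O o)).
  move=> m o; exists 0%N, 0, (fun o' => if o' == o then 1 else 0); split => //=.
  rewrite add0r -(sum_delta (rho m o) o); apply: eq_bigr => o' _.
  by case: eqP => [->|_]; rewrite ?mul1r ?mul0r.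
have Umg : forall m, add_subgroup (Um m).
  move=> m; split; first exact: UmU.
  split.
    move=> x1 x2 [K1 [u1 [c1 [hu1 hx1]]]] [K2 [u2 [c2 [hu2 hx2]]]].
    exists (K1 + K2)%N, (iter K2 z u1 + iter K1 z u2),
      (fun o => c1 o * 'X^K2 + c2 o * 'X^K1); split; first by apply: hUD; apply: izU.
    have -> : iter (K1 + K2) z (x1 + x2) = iter K2 z (iter K1 z x1) + iter K1 z (iter K2 z x2).
      by rewrite (addf_iter haz (K1 + K2)) {1}addnC !iterD.
    rewrite hx1 hx2 (addf_iter haz K1) (addf_iter haz K2) (addf_sum (addf_iter haz K1)) (addf_sum (addf_iter haz K2)) addrACA; congr (_ + _).
    rewrite -big_split; apply: eq_bigr => o _; rewrite !pact_iter //.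
    transitivity (pact z (c1 o * rho m o * 'X^K2 + c2 o * rho m o * 'X^K1) (O o)).
      by rewrite pactD.
    by congr (pact z _ (O o)); ring.
  move=> x [K [u [c [hu hx]]]]; exists K, (- u), (fun o => - c o); split; first exact: hUN.
  rewrite (addfN (addf_iter haz K)) hx opprD -sumrN; congr (_ + _).
  by apply: eq_bigr => o _; rewrite mulNr pactN.
have Umz : forall m, img_eq z (Um m).
  move=> m; split.
    move=> x [K [u [c [hu hx]]]]; exists K, (z u), (fun o => c o * 'X); split.
      exact: (izU 1%N).
    rewrite -iterSr iterS hx haz (addf_sum haz); congr (_ + _).
    by apply: eq_bigr => o _; rewrite -pactMX // mulrAC.
  move=> x [K [u [c [hu hx]]]]; exists (tz x); split; last exact: cz'.
  by exists K.+1, u, c; split => //; rewrite iterSr cz'.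
pose i0 : 'I_b + 'I_q := inl (Ordinal hb).
have rho_i0 : forall m, rho m i0 = lin ^+ m by move=> m; rewrite /rho /= hmb addn0.
have Umne : forall m, Um m <> U.
  move=> m hEq; have hx0 := Umind m i0; rewrite hEq in hx0.
  have [D [hD [al hal]]] := UM _ hx0.
  have := hext al (fun _ => 0) (fun o => if o == i0 then D * rho m i0 else 0).
  case.
    rewrite sum_delta pactM // -hal big1 ?addr0 // => o _; exact: pact0.
  move=> _ /(_ i0); rewrite eqxx => /esym/eqP; rewrite mulf_eq0 (negbTE hD) /=.
  by rewrite rho_i0 (negbTE (hlin m)).
have caseA : forall m j, (0 < j)%N -> (j < b)%N -> ~ img_eq (iter (e * j) sigma) (Um m).
  move=> m j hj0 hjb [hf _].
  pose jo : 'I_b + 'I_q := inl (Ordinal hjb).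
  have e3 : iter (e * j) sigma (pact z (rho m i0) (O i0)) = pact z (rho m i0) (O jo).
    rewrite iter_mul (pact_comm (a := z)) //; first [exact: hyz | exact: (addf_iter hay j)].
  have := hf _ (Umind m i0); rewrite e3; case=> K [u [c [hu hx]]].
  have [D [hD [al hal]]] := UM u hu.
  have hr := relx m _ K u c D al hx hal.
  have := hext al (fun o => D * (c o * rho m o)) (fun o => if o == jo then D * 'X^K * rho m i0 else 0).
  case.
    by rewrite sum_delta (pactM haz (D * 'X^K)) -hr.
  move=> _ /(_ jo); rewrite eqxx rho_i0.
  have hj : (j == 0%N) = false by rewrite eqn0Ngt hj0.
  rewrite /rho /= hj; case: ifP => _; last first.
    move/esym/eqP; rewrite !mulr0 !mulf_eq0 (negbTE hD) expf_eq0 polyX_eq0 andbF.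
    by rewrite (negbTE (hlin m)).
  move=> hh1.
  have h2 : lin ^+ m * D * (c jo * lin) = lin ^+ m * D * 'X^K.
    transitivity (D * (c jo * lin ^+ (m + 1))); first by rewrite exprD expr1; ring.
    by rewrite hh1; ring.
  move/(mulfI (mulf_neq0 (hlin m) hD)) : h2.
  move/(congr1 (fun r : P => r.[1])); rewrite hornerM hornerXsubC subrr mulr0.
  by rewrite hornerXn expr1n => /eqP; rewrite eq_sym oner_eq0.
have hcop : forall m K, coprimep (lin ^+ m) ('X ^+ K).
  move=> m K; apply: coprimep_expl; apply: coprimep_expr.
  by rewrite coprimep_sym coprimep_XsubC rootE hornerX oner_eq0.
have conv : forall v', ~ U v' -> exists Nc, forall m, (Nc <= m)%N -> ~ Um m v'.
  move=> v' hv'.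
  case: (classic (ind z (sumfam (sumfam G O) (fun _ : 'I_1 => v')))) => hind.
    exists 0%N => m _ [K [u [c [hu hx]]]].
    have [D [hD [al hal]]] := UM u hu.
    have hr := relx m v' K u c D al hx hal.
    pose cc (s : (('I_rU * 'I_b) + ('I_b + 'I_q)) + 'I_1) : P := match s with
      | inl (inl i) => - al i | inl (inr o) => - (D * (c o * rho m o))
      | inr _ => D * 'X^K end.
    have hs : \sum_s pact z (cc s) (sumfam (sumfam G O) (fun _ : 'I_1 => v') s) = 0.
      rewrite big_sumType /= big_sumType big_ord1 /= hr.
      under eq_bigr => i _ do rewrite pactN.
      under [X in _ + X + _]eq_bigr => i _ do rewrite pactN.
      by rewrite !sumrN -opprD addNr.
    have := hind _ hs (inr ord0); move/eqP; rewrite /cc mulf_eq0 (negbTE hD).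
    by rewrite expf_eq0 polyX_eq0 andbF.
  have [D' [hD' [a' ha']]] := ext_mult hBO hind.
  exists (\max_(o : 'I_b + 'I_q) size (a' (inr o))) => m hm [K [u [c [hu hx]]]].
  apply: hv'; have [D [hD [al hal]]] := UM u hu.
  have hr := relx m v' K u c D al hx hal.
  have hhh : \sum_i pact z (D * 'X^K * a' (inl i)) (G i) +
            \sum_o pact z (D * 'X^K * a' (inr o)) (O o) =
            \sum_i pact z (D' * al i) (G i) +
            \sum_o pact z (D' * (D * (c o * rho m o))) (O o).
    transitivity (pact z (D * 'X^K) (pact z D' v')).
      rewrite ha' pactv_sum // [RHS]big_sumType /=.
      by apply: (f_equal2 (fun x y => x + y)); apply: eq_bigr => i _; rewrite pactM.
    rewrite -pactM // mulrC pactM // hr (pact_addv haz) !pactv_sum //; congr (_ + _).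
      by apply: eq_bigr => i _; rewrite pactM.
    by apply: eq_bigr => i _; rewrite (pactM haz D').
  have key : forall o, D * 'X^K * a' (inr o) = D' * (D * (c o * rho m o)).
    have := hext (fun i => D * 'X^K * a' (inl i) - D' * al i)
       (fun o => D * 'X^K * a' (inr o)) (fun o => D' * (D * (c o * rho m o))).
    case => // .
    have -> : \sum_i pact z (D * 'X^K * a' (inl i) - D' * al i) (G i) =
        \sum_i pact z (D * 'X^K * a' (inl i)) (G i) - \sum_i pact z (D' * al i) (G i).
      by rewrite -sumrB; apply: eq_bigr => i _; rewrite pactB.
    by rewrite addrAC hhh addrAC subrr add0r.
  have hao : forall o, a' (inr o) = 0.
    move=> o; apply/eqP; apply: contraT => hnz.
    have [r hrr] := hrho_dvd m o.
    have hX : a' (inr o) * 'X^K = (D' * c o * r) * lin ^+ m.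
      apply: (mulfI hD); transitivity (D * 'X^K * a' (inr o)); first by ring.
      rewrite key hrr; ring.
    have hd : lin ^+ m %| a' (inr o) * 'X^K by rewrite hX dvdp_mull.
    rewrite Gauss_dvdpl // in hd.
    have := dvdp_leq hnz hd; rewrite size_exp_XsubC => hsz.
    have := leq_bigmax o (F := fun o => size (a' (inr o))).
    move=> hmax; have := leq_trans hsz (leq_trans hmax hm); by rewrite ltnn.
  have hcr : forall o, c o * rho m o = 0.
    move=> o; apply/eqP; have := key o; rewrite hao mulr0 => /esym/eqP.
    by rewrite !mulf_eq0 (negbTE hD') (negbTE hD).
  have hx' : iter K z v' = u.
    rewrite hx big1 ?addr0 // => o _; rewrite hcr; exact: pact0.
  by rewrite -(iter_cancel cz K v') hx'; apply: itzU.
pose iota (j : 'I_mb + 'I_q) : 'I_b + 'I_q :=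
  match j with inl j => inl (widen_ord hmbb j) | inr l => inr l end.
have incl_iota : forall j, incl (iota j) by case=> [j|l] //=; exact: ltn_ord j.
have vanish : forall Fo : 'I_b + 'I_q -> M,
    (forall j : 'I_b, ~~ (j < mb)%N -> Fo (inl j) = 0) ->
    \sum_o Fo o = \sum_j Fo (iota j).
  move=> Fo hF; rewrite !big_sumType /=; congr (_ + _).
  rewrite (bigID (fun j : 'I_b => (j < mb)%N)) /= [X in _ + X]big1 ?addr0; last first.
    by move=> j /hF.
  by rewrite (big_ord_narrow hmbb).
have Umrank : forall m, exists rk, has_rank p z tz (Um m) rk /\ (rk + r' = N)%N.
  move=> m.
  pose Fam := sumfam G (fun j => pact z (rho m (iota j)) (O (iota j))).
  pose Hsp := sumfam G (fun j => O (iota j)).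
  exists #|{: ('I_rU * 'I_b) + ('I_mb + 'I_q)}|; split; last first.
    by rewrite card_sum card_prod card_sum !card_ord hcardt.
  apply: (mk_rank haz cz' (F := Fam) (H := Hsp)).
  - case=> [i|j] /=; [apply: UmU; exact: hGU | apply: Umind].
  - move=> c hc.
    pose proj (o : 'I_b + 'I_q) : 'I_mb + 'I_q :=
      match o with inl j => inl (Ordinal (ltn_pmod j hmb)) | inr l => inr l end.
    have hproj : forall j, proj (iota j) = j.
      by case=> [j|l] //=; congr inl; apply: val_inj; rewrite /= modn_small.
    have := hext (fun i => c (inl i)) (fun o => c (inr (proj o)) * rho m o) (fun _ => 0).
    case.
      rewrite [RHS]big1; last by move=> o _; exact: pact0.
      rewrite (vanish (fun o => pact z (c (inr (proj o)) * rho m o) (O o))); last first.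
        by move=> j hj; rewrite /rho /= (negbTE hj) mulr0 pact0.
      rewrite -[RHS]hc [RHS]big_sumType /=.
      apply: (f_equal2 (fun x y => x + y)) => //.
      by apply: eq_bigr => j _; rewrite hproj pactM.
    move=> hG hOo [i|j]; first exact: hG.
    have := hOo (iota j); rewrite hproj => /eqP.
    by rewrite mulf_eq0 (negbTE (hrho_nz m _ (incl_iota j))) orbF => /eqP.
  - move=> x [K [u [c [hu hx]]]]; have [D [hD [al hal]]] := UM u hu.
    exists (D * 'X^K); split.
      by rewrite mulf_neq0 // expf_neq0 // polyX_eq0.
    exists (fun s => match s with inl i => al i
      | inr j => D * (c (iota j) * rho m (iota j)) end).
    rewrite (relx m x K u c D al hx hal) [RHS]big_sumType /=.
    apply: (f_equal2 (fun x y => x + y)) => //.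
    rewrite (vanish (fun o => pact z (D * (c o * rho m o)) (O o))) //.
    by move=> j hj; rewrite /rho /= (negbTE hj) !mulr0 pact0.
have [K0 hK0] : exists K0, forall e', (e' < e * b)%N -> (0 < e')%N ->
    ~ img_eq (iter e' sigma) U -> forall m, (K0 <= m)%N -> ~ img_eq (iter e' sigma) (Um m).
  pose Qb := fun e' N0 => (0 < e')%N -> ~ img_eq (iter e' sigma) U ->
     forall m, (N0 <= m)%N -> ~ img_eq (iter e' sigma) (Um m).
  have hmono : forall i m1 m2, (m1 <= m2)%N -> Qb i m1 -> Qb i m2.
    move=> i m1 m2 hle hQ h0 hbad m hm; apply: hQ => //; exact: leq_trans hle hm.
  have hQ : forall i, exists N0, Qb i N0.
    move=> e'; case: (classic (img_eq (iter e' sigma) U)) => himg; first by exists 0%N.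
    have [w0 [hw0 hW]] := bad_witness (iter_cancel hst e') (iter_cancel hts e') himg.
    have [Nc hNc] := conv w0 hw0; exists Nc => _ _ m hm himgm.
    by apply: (hNc m hm); apply: hW himgm; exact: UmU m.
  have [K0 hK0] := finite_bound hmono hQ (e * b).
  by exists K0 => e' he' he'0 hbad; exact: hK0 e' he' he'0 hbad.
exists (fun m => Um (m + K0)%N); split.
  move=> m; split; first exact: Umg.
  split; first exact: UmU.
  split; first exact: Umne.
  split; last by rewrite hzE htzE; exact: Umrank.
  split => //; split; first by rewrite hzE; exact: Umz.
  move=> e' he'0 he'lt himg.
  case: (classic (img_eq (iter e' sigma) U)) => hU'; last first.
    exact: (hK0 e' he'lt he'0 hU' (m + K0)%N (leq_addl m K0) himg).
  have himgq := img_iter_mul heimg (e' %/ e).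
  have hrem : img_eq (iter (e' %% e) sigma) U.
    by apply: (img_sub (c := (e' %/ e * e)%N)) => //; rewrite addnC -divn_eq.
  have hr0 : (e' %% e = 0)%N.
    apply/eqP; apply: contraT; rewrite -lt0n => hpos'.
    by exfalso; exact: (hemin _ hpos' (ltn_pmod e' he0) hrem).
  have he'j : e' = (e * (e' %/ e))%N by rewrite mulnC {1}(divn_eq e' e) hr0 addn0.
  move: (e' %/ e)%N he'j => j he'j; subst e'.
  have hj0 : (0 < j)%N by move: he'0; rewrite muln_gt0 => /andP [].
  have hjb : (j < b)%N by move: he'lt; rewrite ltn_pmul2l.
  exact: (caseA _ _ hj0 hjb himg).
move=> x; case: (classic (U x)) => hx.
  by exists 0%N => m _; split => // _; exact: UmU.
have [Nc hNc] := conv x hx; exists Nc => m hm; split => // hUm; exfalso.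
by apply: (hNc (m + K0)%N) => //; exact: leq_trans hm (leq_addr _ _).
Qed.




End Act.

Unset Implicit Arguments.
Set Strict Implicit.

Theorem lemma6p21 (p : nat) (hp : prime p) (M : zmodType) (sigma tau : M -> M)
  (hadd : forall a b, sigma (a + b) = sigma a + sigma b)
  (hst : cancel sigma tau) (hts : cancel tau sigma)
  (hchar : forall m : M, m *+ p = 0)
  (hfg : fin_gen p sigma tau)
  (n : nat) (hn : has_rank p sigma tau (fun _ => True) n)
  (U : M -> Prop) (hU : add_subgroup U)
  (e : nat) (he : is_e sigma U e)
  (rU : nat) (hrU : has_rank p (iter e sigma) (iter e tau) U rU)
  (hpos : (rU < n * e)%N)
  (b : nat) (hb : (0 < b)%N)
  (r' : nat) (hr' : (r' < (n * e - rU) * b)%N) :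
  exists Us : nat -> M -> Prop,
    (forall m, add_subgroup (Us m) /\ (forall u, U u -> Us m u) /\ Us m <> U /\
       is_e sigma (Us m) (e * b) /\
       exists rk, has_rank p (iter (e * b) sigma) (iter (e * b) tau) (Us m) rk /\
                  (rk + r' = n * (e * b))%N) /\
    set_cvg Us U.

Proof.
exact: (main hp hchar hadd hst hts hn hU he hrU hpos hb hr').
Qed.
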